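(* Let $u,v\in\mathbb{Z}_2^n$ with $d=d_{\mathcal H}(u,v)\le2\varepsilon$ and $\varepsilon/n<1/2$. Then $$\mathcal{I}^\varepsilon_d\le 2^{n\left(h\left(\frac{\varepsilon-\lceil d/2\rceil}{n}\right)-1\right)+d}\le 2^{n(h(\varepsilon/n)-1)+d}\left(\frac{\varepsilon/n}{1-\varepsilon/n}\right)^{\lceil d/2\rceil}.$$
   Context: $d_{\mathcal H}$ is the Hamming distance, $B_\varepsilon(t)=\{y:d_{\mathcal H}(t,y)\le\varepsilon\}$, and $\mathcal{I}^\varepsilon_d=|B_\varepsilon(u)\cap B_\varepsilon(v)|/2^n=\frac{1}{2^n}\sum_{k=\max(0,d-\varepsilon)}^{\min(\varepsilon,d)}\sum_{i=0}^{\min(\varepsilon-k,\varepsilon-d+k)}\binom dk\binom{n-d}{i}$. $h(x)=-x\log_2x-(1-x)\log_2(1-x)$ is the binary entropy function (with $h(0)=0$). *)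

(* Defs.v *)
From mathcomp Require Import all_boot all_order all_algebra.
From mathcomp Require Import all_classical all_reals all_analysis.
Set Implicit Arguments. Unset Strict Implicit. Unset Printing Implicit Defensive.
Import Order.TTheory GRing.Theory Num.Theory.
Local Open Scope ring_scope.

(* Vectors of Z_2^n are modelled as boolean vectors {ffun 'I_n -> bool}. *)
Definition hamming (n : nat) (x y : {ffun 'I_n -> bool}) : nat :=
  #|[set i | x i != y i]|.

Definition hball (n eps : nat) (t : {ffun 'I_n -> bool}) : {set {ffun 'I_n -> bool}} :=
  [set y | (hamming t y <= eps)%N].

Definition Iball (R : realType) (n eps : nat) (u v : {ffun 'I_n -> bool}) : R :=
  #|hball eps u :&: hball eps v|%:R / (2 ^+ n).

Definition log2 (R : realType) (x : R) : R := ln x / ln 2.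

(* binary entropy; h 0 = 0 since 0 * _ = 0 *)
Definition bentropy (R : realType) (x : R) : R :=
  - x * log2 x - (1 - x) * log2 (1 - x).

(* Main.v *)
Require Import Defs.
From mathcomp Require Import all_boot all_order all_algebra.
From mathcomp Require Import all_classical all_reals all_analysis.
From mathcomp Require Import lra zify ring.
Import Order.TTheory GRing.Theory Num.Theory.
Local Open Scope ring_scope.

Lemma gibbs (R : realType) (a b : R) : 0 <= a -> 0 < b -> a * ln b - a * ln a <= b - a.
Proof.
move=> a0 b0; have [->|ap] := eqVneq a 0; first by rewrite !mul0r subrr subr0 ltW.
have a1 : 0 < a by rewrite lt_def ap a0.
have -> : a * ln b - a * ln a = a * ln (b / a).
  by rewrite lnM ?posrE ?invr_gt0 // lnV ?posrE // mulrDr mulrN.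
have h : ln (b / a) <= b / a - 1.
  have := @le_ln1Dx R (b / a - 1); rewrite addrCA subrr addr0; apply.
  by rewrite ltrBrDl subrr divr_gt0.
apply: (le_trans (ler_wpM2l a0 h)).
by rewrite mulrBr mulr1 mulrCA divff ?mulr1.
Qed.

Lemma expR_nat (R : realType) (k : nat) (x : R) : (k = 0%N \/ 0 < x) ->
  expR (k%:R * ln x) = x ^+ k.
Proof.
case=> [->|x0]; first by rewrite mul0r expR0 expr0.
by rewrite mulr_natl -lnXn // lnK // posrE exprn_gt0.
Qed.

Lemma bent_ln (R : realType) (x : R) :
  bentropy x * ln 2 = - x * ln x - (1 - x) * ln (1 - x).
Proof.
have l2 : ln (2 : R) != 0 by rewrite gt_eqF // ln_gt0 // ltr1n.
by rewrite /bentropy /log2 mulrBl -!mulrA !mulVf // !mulr1.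
Qed.

Lemma powR2 (R : realType) (x : R) : powR 2 x = expR (x * ln 2).
Proof. by rewrite /powR pnatr_eq0. Qed.

Lemma card_setsum (T : finType) (P : T -> bool) : #|[set i | P i]| = (\sum_i (P i : nat))%N.
Proof.
rewrite -sum1_card big_mkcond /=; apply: eq_bigr => i _; rewrite inE; by case: (P i).
Qed.

Section S2.
Local Set Implicit Arguments.

Definition Aset n (u v y : {ffun 'I_n -> bool}) : {set 'I_n} :=
  [set i | (u i == v i) && (y i != u i)].
Arguments Aset {n}.

Lemma ham_id n (u v y : {ffun 'I_n -> bool}) :
  (hamming u y + hamming v y = 2 * #|Aset u v y| + hamming u v)%N.
Proof.
rewrite /hamming /Aset !card_setsum big_distrr /= -!big_split /=.
by apply: eq_bigr => i _; case: (u i); case: (v i); case: (y i).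
Qed.

Lemma A_bound n eps (u v y : {ffun 'I_n -> bool}) :
  y \in hball eps u :&: hball eps v ->
  (#|Aset u v y| <= eps - uphalf (hamming u v))%N.
Proof.
rewrite inE /hball !inE => /andP[h1 h2].
have := ham_id u v y; have := odd_double_half (hamming u v).
rewrite uphalf_half; case: (odd _) => /=; lia.
Qed.

End S2.
Section S3.
Local Set Implicit Arguments.

Lemma weight_bound (R : realType) n eps (u v : {ffun 'I_n -> bool}) (q : R) (m : nat) :
  0 <= q -> q <= 1 - q -> (m <= n)%N ->
  (forall y, y \in hball eps u :&: hball eps v -> (#|Aset u v y| <= m)%N) ->
  #|hball eps u :&: hball eps v|%:R * (q ^+ m * (1 - q) ^+ (n - m)) <= 2 ^+ hamming u v.
Proof.
move=> q0 qq mn hA.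
set I := hball eps u :&: hball eps v.
set K := q ^+ m * (1 - q) ^+ (n - m).
have q1 : 0 <= 1 - q by lra.
pose F i (b : bool) : R := if u i != v i then 1 else if b != u i then q else 1 - q.
have F0 : forall i b, 0 <= F i b.
  by move=> i b; rewrite /F; case: ifP => _ //; case: ifP.
have tot : \sum_(y : {ffun 'I_n -> bool}) \prod_i F i (y i) = 2 ^+ hamming u v.
  rewrite -(bigA_distr_bigA F).
  rewrite (eq_bigr (fun i => if u i != v i then 2 else 1)); last first.
    move=> i _; rewrite big_bool /F; case: (u i != v i) => //; case: (u i) => /=; lra.
  rewrite -big_mkcond /= prodr_const; congr (_ ^+ _).
  by apply: eq_card => i; rewrite inE.
have low : forall y, y \in I -> K <= \prod_i F i (y i).
  move=> y yI; have aM := hA y yI; set A := Aset u v y in aM *.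
  rewrite (bigID (fun i => i \in A)) /=.
  rewrite (eq_bigr (fun _ => q)); last first.
    move=> i; rewrite /A /Aset inE => /andP[/eqP e h].
    by rewrite /F e eqxx /= -e h.
  rewrite prodr_const.
  rewrite (eq_bigl (fun i => i \in ~: A)); last by move=> i; rewrite finset.in_setC.
  have h2 : \prod_(i in ~: A) (1 - q) <= \prod_(i in ~: A) F i (y i).
    apply: ler_prod => i; rewrite finset.in_setC /A /Aset inE negb_and negbK => h.
    rewrite /F; case: ifP => [_|/negbFE e]; first by rewrite q1 /=; lra.
    by rewrite e /= in h; rewrite h /= q1 lexx.
  rewrite prodr_const in h2.
  have cA : #|~: A| = (n - #|A|)%N by rewrite cardsCs finset.setCK card_ord.
  rewrite cA in h2.
  apply: (le_trans _ (ler_wpM2l (exprn_ge0 _ q0) h2)).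
  rewrite /K.
  have -> : (n - #|A| = (m - #|A|) + (n - m))%N by lia.
  have -> : q ^+ m = q ^+ #|A| * q ^+ (m - #|A|) by rewrite -exprD subnKC.
  rewrite exprD -!mulrA; apply: ler_wpM2l; first exact: exprn_ge0.
  apply: ler_wpM2r; first exact: exprn_ge0.
  by apply: lerXn2r => //; rewrite nnegrE.
have -> : #|I|%:R * K = \sum_(y in I) K by rewrite sumr_const mulr_natl.
rewrite -tot [X in _ <= X](bigID (fun y => y \in I)) /=.
rewrite -[X in X <= _]addr0; apply: lerD.
  exact: ler_sum.
by apply: sumr_ge0 => y _; apply: prodr_ge0 => i _.
Qed.

End S3.

Theorem lemma4p13 (R : realType) (n eps : nat) (u v : {ffun 'I_n -> bool}) :
  (0 < n)%N ->
  (hamming u v <= 2 * eps)%N ->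
  (eps%:R / n%:R : R) < 1 / 2 ->
  let d := hamming u v in
  let p : R := eps%:R / n%:R in
  Iball R eps u v
    <= powR 2 (n%:R * (bentropy ((eps%:R - (uphalf d)%:R) / n%:R) - 1) + d%:R)
  /\
  powR 2 (n%:R * (bentropy ((eps%:R - (uphalf d)%:R) / n%:R) - 1) + d%:R)
    <= powR 2 (n%:R * (bentropy p - 1) + d%:R) * (p / (1 - p)) ^+ (uphalf d).
Proof.
move=> n0 hd hp; cbv zeta.
have WB := @weight_bound R n eps u v.
have AB := @A_bound n eps u v.
set d := hamming u v in hd WB AB *.
set c := uphalf d in AB *.
have cle : (c <= eps)%N.
  by rewrite /c uphalf_half; have := odd_double_half d; case: (odd d) => /=; lia.
set m := (eps - c)%N in AB *.
have em : eps%:R - c%:R = m%:R :> R by rewrite /m natrB.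
rewrite em.
set q : R := m%:R / n%:R.
set p : R := eps%:R / n%:R in hp *.
have nR : 0 < n%:R :> R by rewrite ltr0n.
have nq : n%:R * q = m%:R by rewrite /q mulrC divfK // gt_eqF.
have np : n%:R * p = eps%:R by rewrite /p mulrC divfK // gt_eqF.
have q0 : 0 <= q by rewrite /q divr_ge0.
have qp : q <= p.
  rewrite /q /p; apply: ler_wpM2r; first by rewrite invr_ge0 ltW.
  by rewrite ler_nat /m leq_subr.
have qq : q <= 1 - q by lra.
have mn : (m <= n)%N.
  have : eps%:R < n%:R :> R by rewrite -np; nra.
  rewrite ltr_nat /m; lia.
have nq1 : n%:R * (1 - q) = (n - m)%:R by rewrite (natrB _ mn) mulrBr mulr1 nq.
have Kq : m = 0%N \/ 0 < q.
  have [->|mp] := posnP m; first by left.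
  by right; rewrite /q divr_gt0 // ltr0n.
have q1 : 0 < 1 - q by lra.
set K := q ^+ m * (1 - q) ^+ (n - m).
have Kp : 0 < K.
  rewrite /K mulr_gt0 //; last exact: exprn_gt0.
  case: Kq => [e|h]; last exact: exprn_gt0.
  by rewrite e expr0 ltr01.
have W := WB q m q0 qq mn AB.
have twoP : 0 < (2 : R) by [].
have eE : (n%:R * (bentropy q - 1) + d%:R) * ln 2 =
   - (m%:R * ln q) + (- ((n - m)%:R * ln (1 - q)) + (- (n%:R * ln 2) + d%:R * ln 2)).
  rewrite mulrDl -mulrA mulrBl bent_ln mul1r -nq1 -nq; ring.
split.
  have -> : powR 2 (n%:R * (bentropy q - 1) + d%:R) = 2 ^+ d / K / 2 ^+ n.
    rewrite powR2 eE !expRD !expRN expR_nat // expR_nat; last by right.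
    rewrite expR_nat; last by right.
    rewrite expR_nat; last by right.
    by rewrite /K invfM; ring.
  rewrite /Iball; apply: ler_wpM2r; first by rewrite invr_ge0 exprn_ge0.
  by rewrite ler_pdivlMr.
have [c0|cpos] := eqVneq c 0%N.
  have -> : q = p by rewrite /q /p /m c0 subn0.
  by rewrite c0 expr0 mulr1.
have pp : 0 < p.
  by rewrite /p divr_gt0 // ltr0n; move: cpos cle; lia.
have p1 : 0 < 1 - p by lra.
have cq : c%:R = n%:R * (p - q).
  by rewrite mulrBr np nq -em; ring.
rewrite !powR2 -(@expR_nat R c (p / (1 - p))); last by right; rewrite divr_gt0.
rewrite -expRD ler_expR.
rewrite lnM ?posrE ?invr_gt0 // lnV ?posrE //.
have g1 := @gibbs R _ _ q0 pp.
have g2 := @gibbs R _ _ (ltW q1) p1.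
have Ex : forall x : R, (n%:R * (bentropy x - 1) + d%:R) * ln 2 =
    n%:R * (- x * ln x - (1 - x) * ln (1 - x)) - n%:R * ln 2 + d%:R * ln 2.
  by move=> x; rewrite mulrDl -mulrA mulrBl bent_ln mul1r; ring.
rewrite !Ex cq.
set Lp := ln p in g1 g2 *; set Lq := ln q in g1 g2 *.
set L1p := ln (1 - p) in g1 g2 *; set L1q := ln (1 - q) in g1 g2 *.
have br : 0 <= - q * Lp - (1 - q) * L1p + q * Lq + (1 - q) * L1q by lra.
have n0' : 0 <= n%:R :> R by rewrite ler0n.
nra.
Qed.
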